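(* Let $(R,\mathfrak m)$ be a noetherian local ring, $\nu$ a valuation centered on $R$, and assume $I=\mathrm{Nil}(R)$ is the only associated prime ideal of $R$. Fix $n\ge1$ and take $y_1,\ldots,y_{r+s}\in I^n$ whose images generate $I^n/I^{n+1}$ as an $R_{\rm red}$-module. Let $b\in R\setminus I$ and let $\pi:R\to R^{(1)}$ be the local blowing up with respect to $\nu$ along $(b,y_1,\ldots,y_r)$, with $y_i^{(1)}=\pi(y_i)/b$ for $1\le i\le r$. If the images of $y_1,\ldots,y_r$ in $I^n/I^{n+1}$ are $R_{\rm red}$-linearly independent, then the images of $y_1^{(1)},\ldots,y_r^{(1)}$ in $I_{(1)}^n/I_{(1)}^{n+1}$ are $(R^{(1)})_{\rm red}$-linearly independent, where $I_{(1)}=\mathrm{Nil}(R^{(1)})$.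
   Context: All rings are commutative noetherian with $1$; $\mathrm{Nil}(A)$ is the nilradical of $A$ and $A_{\rm red}=A/\mathrm{Nil}(A)$. A valuation on a ring $R$ is a map $\nu:R\to\Gamma\cup\{\infty\}$ ($\Gamma$ an ordered abelian group) with $\nu(ab)=\nu(a)+\nu(b)$, $\nu(a+b)\ge\min\{\nu(a),\nu(b)\}$, $\nu(1)=0$, $\nu(0)=\infty$, whose support $\mathrm{supp}(\nu)=\{a:\nu(a)=\infty\}$ is a minimal prime ideal; it extends to localizations at multiplicative sets disjoint from the support via $\nu(a/s)=\nu(a)-\nu(s)$ and restricts to subrings, implicitly. $\nu$ has a center on $R$ if $\nu\ge0$ on $R$; its center is $\mathfrak C_\nu(R)=\{a:\nu(a)>0\}$. $\nu$ is centered on $(R,\mathfrak m)$ if $\nu\ge0$ on $R$ and $\nu>0$ on $\mathfrak m$. Local blowing up: for $b\in R\setminus\mathrm{supp}(\nu)$ let $J(b)=\bigcup_{i\ge1}\mathrm{ann}_R(b^i)$, so $R/J(b)\subseteq R_b$. Given $a_1,\ldots,a_r\in R$ with $\nu(a_i)\ge\nu(b)$, let $R'=(R/J(b))[a_1/b,\ldots,a_r/b]\subseteq R_b$ and $R^{(1)}=R'_{\mathfrak C_\nu(R')}$; the canonical map $R\to R^{(1)}$ is the local blowing up of $R$ with respect to $\nu$ along $(b,a_1,\ldots,a_r)$. (Here $\mathrm{supp}(\nu)=I$, $J(b)=0$, and $\nu(y_i)=\infty$ since $y_i$ is nilpotent.) *)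

(* Defs.v *)
From HB Require Import structures.
From mathcomp Require Import all_boot all_order all_algebra.
Set Implicit Arguments. Unset Strict Implicit. Unset Printing Implicit Defensive.
Import Order.TTheory GRing.Theory.
Local Open Scope ring_scope.

Section RingDefs.
Variable R : comPzRingType.

Definition is_ideal (J : R -> Prop) : Prop :=
  J 0 /\ (forall x y, J x -> J y -> J (x + y)) /\ (forall a x, J x -> J (a * x)).

Definition is_prime (P : R -> Prop) : Prop :=
  is_ideal P /\ ~ P 1 /\ (forall x y, P (x * y) -> P x \/ P y).

Definition nilrad (x : R) : Prop := exists k : nat, x ^+ k = 0.

Definition is_assoc_prime (P : R -> Prop) : Prop :=
  is_prime P /\ exists x : R, forall a, P a <-> a * x = 0.

Definition ideal_mul (J K : R -> Prop) (x : R) : Prop :=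
  exists s : seq (R * R), (forall p, p \in s -> J p.1 /\ K p.2) /\
    x = \sum_(p <- s) p.1 * p.2.

Fixpoint ideal_pow (J : R -> Prop) (n : nat) : R -> Prop :=
  match n with
  | 0 => fun _ => True
  | k.+1 => ideal_mul J (ideal_pow J k)
  end.

Definition noetherian : Prop :=
  forall J : nat -> R -> Prop, (forall k, is_ideal (J k)) ->
    (forall k x, J k x -> J k.+1 x) ->
    exists N, forall k, (N <= k)%N -> forall x, J k x -> J N x.

Definition is_local (m : R -> Prop) : Prop :=
  is_ideal m /\ ~ m 1 /\ forall x, ~ m x -> exists y, x * y = 1.
End RingDefs.

Definition ordered_group (G : zmodType) (le : G -> G -> bool) : Prop :=
  (forall x, le x x) /\ (forall x y, le x y -> le y x -> x = y) /\
  (forall x y z, le x y -> le y z -> le x z) /\ (forall x y, le x y || le y x) /\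
  (forall x y z, le x y -> le (x + z) (y + z)).

(* Gamma ∪ {∞}, with None = ∞ *)
Definition vle (G : zmodType) (le : G -> G -> bool) (a b : option G) : bool :=
  match a, b with
  | _, None => true
  | None, Some _ => false
  | Some x, Some y => le x y
  end.

Definition vlt (G : zmodType) (le : G -> G -> bool) (a b : option G) : bool :=
  vle le a b && (a != b).

Definition vadd (G : zmodType) (a b : option G) : option G :=
  match a, b with
  | Some x, Some y => Some (x + y)
  | _, _ => None
  end.

Definition is_valuation (R : comPzRingType) (G : zmodType) (le : G -> G -> bool)
    (nu : R -> option G) : Prop :=
  (forall a b, nu (a * b) = vadd (nu a) (nu b)) /\
  (forall a b g, vle le g (nu a) -> vle le g (nu b) -> vle le g (nu (a + b))) /\
  nu 1 = Some 0 /\ nu 0 = None /\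
  (* the support is a minimal prime ideal *)
  is_prime (fun a => nu a = None) /\
  (forall P, is_prime P -> (forall a, P a -> nu a = None) -> forall a, nu a = None -> P a).

Definition centered_on (R : comPzRingType) (G : zmodType) (le : G -> G -> bool)
    (nu : R -> option G) (m : R -> Prop) : Prop :=
  (forall a, vle le (Some 0) (nu a)) /\ (forall a, m a -> vlt le (Some 0) (nu a)).

(* phi : R -> T is a localization of R at the powers of b (T = R_b);
   bi is the inverse of phi b in T *)
Definition is_loc_powers (R T : comPzRingType) (phi : {rmorphism R -> T}) (b : R) (bi : T) : Prop :=
  phi b * bi = 1 /\
  (forall t : T, exists a k, t * phi b ^+ k = phi a) /\
  (forall a a', phi a = phi a' <-> exists k, b ^+ k * a = b ^+ k * a').

Inductive gen_subring (T : comPzRingType) (A : T -> Prop) : T -> Prop :=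
  | gs_base t : A t -> gen_subring A t
  | gs_one : gen_subring A 1
  | gs_add u v : gen_subring A u -> gen_subring A v -> gen_subring A (u + v)
  | gs_opp u : gen_subring A u -> gen_subring A (- u)
  | gs_mul u v : gen_subring A u -> gen_subring A v -> gen_subring A (u * v).

(* psi : T -> S restricted to the subring Rp of T is a localization of Rp at the
   multiplicative set {c in Rp | ~ C c}  (i.e. S = (Rp)_C when C is a prime of Rp) *)
Definition is_loc_at_prime (T S : comPzRingType) (Rp C : T -> Prop) (psi : T -> S) : Prop :=
  psi 1 = 1 /\
  (forall u v, Rp u -> Rp v -> psi (u + v) = psi u + psi v) /\
  (forall u v, Rp u -> Rp v -> psi (u * v) = psi u * psi v) /\
  (forall c, Rp c -> ~ C c -> exists w, psi c * w = 1) /\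
  (forall z : S, exists a c, Rp a /\ Rp c /\ ~ C c /\ z * psi c = psi a) /\
  (forall a a', Rp a -> Rp a' ->
     (psi a = psi a' <-> exists c, Rp c /\ ~ C c /\ c * a = c * a')).

(* Main.v *)
Require Import Defs.
From HB Require Import structures.
From mathcomp Require Import all_boot all_order all_algebra ring.
Set Implicit Arguments. Unset Strict Implicit. Unset Printing Implicit Defensive.
Import Order.TTheory GRing.Theory.
Local Open Scope ring_scope.

Lemma ip0 (R : comPzRingType) (J : R -> Prop) k : ideal_pow J k 0.
Proof. by case: k => [|k] //=; exists [::]; split => //; rewrite big_nil. Qed.

Lemma ipD (R : comPzRingType) (J : R -> Prop) k x y :
  ideal_pow J k x -> ideal_pow J k y -> ideal_pow J k (x + y).
Proof.
case: k => [|k] //= [s [Hs ->]] [t [Ht ->]].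
exists (s ++ t); split; last by rewrite big_cat.
by move=> p; rewrite mem_cat => /orP[/Hs|/Ht].
Qed.

Lemma ipM (R : comPzRingType) (J : R -> Prop) k a x :
  ideal_pow J k x -> ideal_pow J k (a * x).
Proof.
elim: k a x => [|k IH] a x //= [s [Hs ->]].
exists [seq (p.1, a * p.2) | p <- s]; split.
  move=> p /mapP[q /Hs [H1 H2] ->] /=; split => //; exact: IH.
rewrite big_map mulr_sumr; apply: eq_bigr => p _ /=; ring.
Qed.

Lemma ipS (R : comPzRingType) (J : R -> Prop) k x y :
  J x -> ideal_pow J k y -> ideal_pow J k.+1 (x * y).
Proof.
move=> Hx Hy; exists [:: (x, y)]; split; last by rewrite big_seq1.
by move=> p; rewrite inE => /eqP ->.
Qed.

Lemma nilX (R : comPzRingType) (x : R) k : nilrad (x ^+ k) -> nilrad x.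
Proof. by case=> l H; exists (k * l)%N; rewrite exprM. Qed.

Lemma nilM (R : comPzRingType) (x y : R) : nilrad x -> nilrad (y * x).
Proof. by case=> l H; exists l; rewrite exprMn H mulr0. Qed.

Lemma nil_unit (R : comNzRingType) (x v : R) : nilrad x -> x * v = 1 -> False.
Proof.
case=> l H Hv; have : (x * v) ^+ l = 1 by rewrite Hv expr1n.
by rewrite exprMn H mul0r => /eqP; rewrite eq_sym oner_eq0.
Qed.
Theorem mainTheorem17
  (R : comNzRingType) (m : R -> Prop)
  (Hnoeth : noetherian R) (Hloc : is_local m)
  (G : zmodType) (le : G -> G -> bool) (Hle : ordered_group le)
  (nu : R -> option G) (Hnu : is_valuation le nu) (Hcent : centered_on le nu m)
  (Hass : forall P : R -> Prop, is_assoc_prime P <-> (forall x, P x <-> nilrad x))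
  (n r s : nat) (Hn : (1 <= n)%N)
  (y : 'I_(r + s) -> R)
  (Hy : forall i, ideal_pow (@nilrad R) n (y i))
  (Hgen : forall z, ideal_pow (@nilrad R) n z ->
     exists c : 'I_(r + s) -> R,
       ideal_pow (@nilrad R) n.+1 (z - \sum_(i < r + s) c i * y i))
  (b : R) (Hb : ~ nilrad b)
  (* T = R_b *)
  (T : comNzRingType) (phi : {rmorphism R -> T}) (bi : T)
  (HT : is_loc_powers phi b bi)
  (* R' = (R/J(b))[y_1/b, ..., y_r/b] inside R_b *)
  (Rp : T -> Prop)
  (HRp : forall t, Rp t <-> gen_subring
           (fun u => (exists a, u = phi a) \/ (exists i : 'I_r, u = phi (y (lshift s i)) * bi)) t)
  (* C = center of nu on R' *)
  (C : T -> Prop)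
  (HC : forall t, C t <-> (Rp t /\ exists (a : R) (k : nat),
           t * phi b ^+ k = phi a /\ vlt le (nu (b ^+ k)) (nu a)))
  (* R^(1) = R'_C, with the canonical map psi *)
  (R1 : comNzRingType) (psi : T -> R1) (HS : is_loc_at_prime Rp C psi) :
  (forall c : 'I_r -> R,
     ideal_pow (@nilrad R) n.+1 (\sum_(i < r) c i * y (lshift s i)) ->
     forall i, nilrad (c i)) ->
  forall c : 'I_r -> R1,
    ideal_pow (@nilrad R1) n.+1 (\sum_(i < r) c i * psi (phi (y (lshift s i)) * bi)) ->
    forall i, nilrad (c i).
Proof.
move=> Hind c Hc i0.
case: ((Hass (@nilrad R)).2 (fun _ => conj id id)) => [[_ [_ Rprime]] _].
case: HT => [Hbi [Hrep Hinj]].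
case: HS => [psi1 [psiD [psiM [psiU [psiR psiI]]]]].
have RpR a : Rp (phi a) by apply/HRp; apply: gs_base; left; exists a.
have RpY (i : 'I_r) : Rp (phi (y (lshift s i)) * bi) by apply/HRp; apply: gs_base; right; exists i.
have RpD u v : Rp u -> Rp v -> Rp (u + v) by move=> /HRp ? /HRp ?; apply/HRp; apply: gs_add.
have RpM u v : Rp u -> Rp v -> Rp (u * v) by move=> /HRp ? /HRp ?; apply/HRp; apply: gs_mul.
have Rp1 : Rp 1 by apply/HRp; apply: gs_one.
have Rp0 : Rp 0 by rewrite -(rmorph0 phi).
have psi0 : psi 0 = 0.
  have := psiD 0 0 Rp0 Rp0; rewrite addr0 => /(congr1 (fun z => z - psi 0)).
  by rewrite subrr addrK => <-.
have RpX u k : Rp u -> Rp (u ^+ k).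
  by move=> Hu; elim: k => [|k IH]; rewrite ?expr0 // exprS; apply: RpM.
have psiX u k : Rp u -> psi (u ^+ k) = psi u ^+ k.
  move=> Hu; elim: k => [|k IH]; first by rewrite !expr0.
  by rewrite !exprS psiM ?IH //; apply: RpX.
have phi0 a : phi a = 0 -> nilrad a.
  rewrite -(rmorph0 phi) => /Hinj [j]; rewrite mulr0 => Hj.
  have : nilrad (b ^+ j * a) by exists 1%N; rewrite expr1.
  by case/Rprime => // /nilX.
have phinil a : nilrad a -> nilrad (phi a).
  by case=> l Hl; exists l; rewrite -rmorphXn Hl rmorph0.
have nilcancel t k : nilrad (t * phi b ^+ k) -> nilrad t.
  move=> /(nilM (bi ^+ k)); congr nilrad.
  by rewrite mulrCA -exprMn (mulrC bi) Hbi expr1n mulr1.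
have nilT t : nilrad t -> exists M al, nilrad al /\ t * phi b ^+ M = phi al.
  case: (Hrep t) => a [k Hk] [l Hl]; exists k, a; split => //.
  apply: (@nilX _ _ l); apply: phi0; by rewrite rmorphXn -Hk exprMn Hl mul0r.
have Tprime (t t' : T) : nilrad (t * t') -> nilrad t \/ nilrad t'.
  case: (Hrep t) => a [k Hk]; case: (Hrep t') => a' [k' Hk'] [l Hl].
  have : nilrad (a * a').
    apply: (@nilX _ _ l); apply: phi0.
    have E : phi a * phi a' = (t * t') * phi b ^+ (k + k') by rewrite -Hk -Hk' exprD; ring.
    by rewrite rmorphXn rmorphM E exprMn Hl mul0r.
  case/Rprime => /phinil; [rewrite -Hk => /nilcancel; left | rewrite -Hk' => /nilcancel; right]; done.
pose P (k : nat) (t : T) := exists M be, ideal_pow (@nilrad R) k be /\ t * phi b ^+ M = phi be.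
have P0 t : P 0%N t by case: (Hrep t) => a [k Hk]; exists k, a.
have PM k t u : P k t -> P k (t * u).
  case=> M [be [Hbe E]]; case: (Hrep u) => a [m' Hm].
  exists (M + m')%N, (a * be); split; first exact: ipM.
  by rewrite rmorphM -E -Hm exprD; ring.
have PD k t t' : P k t -> P k t' -> P k (t + t').
  case=> M [be [Hbe E]] [M' [be' [Hbe' E']]].
  exists (M + M')%N, (b ^+ M' * be + b ^+ M * be'); split; first by apply: ipD; apply: ipM.
  by rewrite rmorphD !rmorphM !rmorphXn -E -E' exprD; ring.
have PS k u w : nilrad u -> P k w -> P k.+1 (u * w).
  move=> /nilT [M1 [al [Hal E1]]] [M [be [Hbe E]]].
  exists (M1 + M)%N, (al * be); split; first exact: ipS.
  by rewrite rmorphM -E1 -E exprD; ring.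
have L1 k x : ideal_pow (@nilrad R1) k x -> exists w e, Rp w /\ Rp e /\
    (exists v, psi e * v = 1) /\ x * psi e = psi w /\ P k w.
  elim: k x => [|k IH] x.
    move=> _; case: (psiR x) => a [e [Ha [He [HCe E]]]].
    by exists a, e; split; [done|split; [done|split; [exact: psiU|split; [done|exact: P0]]]].
  move=> [sq [Hsq ->]]; elim: sq Hsq => [|p sq IHs] Hsq.
    exists 0, 1; split; first done; split; first done; split; first by exists 1; rewrite psi1 mulr1.
    split; first by rewrite big_nil mul0r psi0.
    by exists 0%N, 0; split; [exact: ip0 | rewrite mul0r rmorph0].
  rewrite big_cons.
  have [[l Hl] Hp2] := Hsq p (mem_head _ _).
  have [w' [e' [Hw' [He' [[v' Hv'] [E' P']]]]]] : exists w e, Rp w /\ Rp e /\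
    (exists v, psi e * v = 1) /\ (\sum_(j <- sq) j.1 * j.2) * psi e = psi w /\ P k.+1 w.
    by apply: IHs => q Hq; apply: Hsq; rewrite inE Hq orbT.
  have [w2 [e2 [Hw2 [He2 [[v2 Hv2] [E2 P2]]]]]] := IH _ Hp2.
  case: (psiR p.1) => a1 [c1 [Ha1 [Hc1 [HC1 E1]]]].
  have : psi (a1 ^+ l) = psi 0 by rewrite psiX // -E1 exprMn Hl mul0r psi0.
  case/(psiI _ _ (RpX _ _ Ha1) Rp0) => d [Hd [HCd Ed]].
  have nu1 : nilrad (d * a1).
    exists l.+1; have -> : (d * a1) ^+ l.+1 = d ^+ l * a1 * (d * a1 ^+ l) by rewrite exprS exprMn; ring.
    by rewrite Ed !mulr0.
  have [vd Hvd] := psiU _ Hd HCd.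
  have [vc Hvc] := psiU _ Hc1 HC1.
  exists (d * a1 * w2 * e' + w' * (d * c1 * e2)), (d * c1 * e2 * e').
  split; first by repeat first [apply RpD | apply RpM | assumption].
  split; first by repeat first [apply RpD | apply RpM | assumption].
  split.
    exists (vd * vc * v2 * v'); rewrite !psiM; try by repeat first [apply RpD | apply RpM | assumption].
    have -> : psi d * psi c1 * psi e2 * psi e' * (vd * vc * v2 * v') =
      (psi d * vd) * (psi c1 * vc) * (psi e2 * v2) * (psi e' * v') by ring.
    by rewrite Hvd Hvc Hv2 Hv' !mulr1.
  split; last by apply: PD; [apply: PM; apply: PS | apply: PM].
  rewrite psiD ?psiM; try by repeat first [apply RpD | apply RpM | assumption].
  rewrite -E1 -E2 -E'; ring.
have nounit u : Rp u -> (exists v, psi u * v = 1) -> nilrad u -> False.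
  move=> Hu [v Hv] [k Hk]; apply: (@nil_unit _ (psi u) v) Hv.
  by exists k; rewrite -psiX // Hk psi0.
have [d [a [Hd [[vd Hvd] Ha]]]] : exists (d : T) (a : 'I_r -> T), Rp d /\
    (exists v, psi d * v = 1) /\ forall i, Rp (a i) /\ c i * psi d = psi (a i).
  suff [d [a [Hd [U Ha]]]] : exists (d : T) (a : 'I_r -> T), Rp d /\
    (exists v, psi d * v = 1) /\ forall i, i \in enum 'I_r -> Rp (a i) /\ c i * psi d = psi (a i).
    by exists d, a; split; [done|split; [done|move=> i; apply: Ha; rewrite mem_enum]].
  elim: (enum 'I_r) => [|j l [d [a [Hd [[v Hv] Ha]]]]].
    by exists 1, (fun _ => 0); split; [done|split; [exists 1; rewrite psi1 mulr1|done]].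
  case: (psiR (c j)) => aj [ej [Haj [Hej [HCej Ej]]]].
  have [vj Hvj] := psiU _ Hej HCej.
  exists (d * ej), (fun i => if i == j then aj * d else a i * ej).
  split; first exact: RpM.
  split.
    exists (v * vj); rewrite psiM //.
    by rewrite mulrACA Hv Hvj mulr1.
  move=> i; rewrite inE; case: eqP => [-> _|_ /= Hi].
    by split; [exact: RpM| rewrite !psiM // mulrA (mulrC (c j)) -mulrA Ej mulrC].
  have [Hai Ei] := Ha i Hi.
  by split; [exact: RpM| rewrite !psiM // mulrA Ei].
have [w [e [Hw [He [Ue [Ew Pw]]]]]] := L1 _ _ Hc.
pose Y (i : 'I_r) := phi (y (lshift s i)) * bi.
pose S := \sum_(i < r) a i * Y i.
have RpY' i : Rp (Y i) := RpY i.
have RpA i : Rp (a i) := (Ha i).1.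
have RpAY i : Rp (a i * Y i) := RpM _ _ (RpA i) (RpY' i).
have [RpS psiS] : Rp S /\ psi S = \sum_(i < r) psi (a i) * psi (Y i).
  rewrite /S; apply: (big_rec2 (fun u z => Rp u /\ psi u = z)).
    by rewrite psi0.
  move=> i u z _ [Hu <-]; split; first by apply: RpD.
  by rewrite psiD ?(psiM _ _ (RpA i) (RpY' i)).
have : psi (e * S) = psi (d * w).
  rewrite (psiM _ _ He RpS) (psiM _ _ Hd Hw) -Ew psiS.
  have -> : \sum_(i < r) psi (a i) * psi (Y i) =
     psi d * \sum_(i < r) c i * psi (phi (y (lshift s i)) * bi).
    rewrite mulr_sumr; apply: eq_bigr => i _.
    by rewrite -(proj2 (Ha i)); ring.
  ring.
case/(psiI _ _ (RpM _ _ He RpS) (RpM _ _ Hd Hw)) => c0 [Hc0 [HCc0 E0]].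
have Ut0 := psiU _ Hc0 HCc0.
pose t := c0 * e.
have [M [be [Hbe Ebe]]] : P n.+1 (t * S).
  by rewrite /t -mulrA E0 mulrA mulrC; apply: PM.
have /fin_all_exists [al Hal] : forall i : 'I_r, exists ak : R * nat,
    t * a i * phi b ^+ ak.2 = phi ak.1.
  by move=> i; case: (Hrep (t * a i)) => x [k Hk]; exists (x, k).
have [N HN] : exists N, forall i : 'I_r, ((al i).2 <= N)%N.
  by exists (\max_(i : 'I_r) (al i).2)%N => i; apply: leq_bigmax.
pose alp (i : 'I_r) := (al i).1 * b ^+ (N - (al i).2).
have Halp i : t * a i * phi b ^+ N = phi (alp i).
  rewrite /alp rmorphM rmorphXn -Hal -[RHS]mulrA -exprD subnKC //.
have Ey i : phi (y (lshift s i)) = phi b * Y i.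
  by rewrite /Y mulrCA Hbi mulr1.
have : phi (b ^+ M * \sum_(i < r) alp i * y (lshift s i)) = phi (be * b ^+ N.+1).
  rewrite rmorphM rmorphXn rmorph_sum rmorphM -Ebe rmorphXn /S.
  rewrite !mulr_sumr !mulr_suml; apply: eq_bigr => i _.
  by rewrite rmorphM -Halp Ey exprS; ring.
case/Hinj => j Ej.
have Hsum : ideal_pow (@nilrad R) n.+1
    (\sum_(i < r) (b ^+ j * b ^+ M * alp i) * y (lshift s i)).
  have -> : \sum_(i < r) (b ^+ j * b ^+ M * alp i) * y (lshift s i) =
     b ^+ j * (b ^+ M * \sum_(i < r) alp i * y (lshift s i)).
    by rewrite !mulr_sumr; apply: eq_bigr => i _; ring.
  by rewrite Ej (mulrC be) mulrA; apply: ipM.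
have /phinil := Hind _ Hsum i0.
have -> : phi (b ^+ j * b ^+ M * alp i0) = t * a i0 * phi b ^+ (j + M + N).
  by rewrite rmorphM -Halp !rmorphM !rmorphXn !exprD; ring.
move/nilcancel; rewrite /t -mulrA => /Tprime [/(nounit _ Hc0 Ut0) //|].
case/Tprime => [/(nounit _ He Ue) //|].
case: (Ha i0) => Hai Eai [k Hk].
have : nilrad (vd * (c i0 * psi d)).
  by apply: nilM; exists k; rewrite Eai -psiX // Hk psi0.
by rewrite mulrCA (mulrC vd) Hvd mulr1.
Qed.
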